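(* Let $G$ be a finite simple connected graph and $H$ an induced subgraph of $G$ with $\mathrm{diam}(H)=2$. If $\beta(H)=n(H)-t$ for some positive integer $t$, then $\beta(G)\le n(G)-t$.
   Context: $n(X)$ denotes the number of vertices of a graph $X$. For an ordered set $W=\{w_1,\dots,w_k\}$ of vertices of a connected graph $X$, $r(v|W)=(d_X(v,w_1),\dots,d_X(v,w_k))$ with $d_X$ the shortest-path distance; $W$ is a resolving set if distinct vertices have distinct vectors $r(\cdot|W)$, and $\beta(X)$, the metric dimension, is the minimum size of a resolving set. *)

(* Defs.v *)
From mathcomp Require Import all_boot.
Set Implicit Arguments. Unset Strict Implicit. Unset Printing Implicit Defensive.

(* A simple graph is given by a vertex type T : finType and an edge relation
   e : rel T that is symmetric and irreflexive.  An induced subgraph is given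
   by its vertex set S : {set T} (edges = those of e between vertices of S). *)

Section Graph.
Variables (T : finType) (e : rel T).

(* walk S k u v : there is a walk of length k from u to v in G[S]
   (all vertices after u lie in S). *)
Fixpoint walk (S : {set T}) (k : nat) (u v : T) : bool :=
  if k is k'.+1 then [exists w in S, e u w && walk S k' w v] else u == v.

(* Shortest-path distance in the induced subgraph G[S]: the least k with a
   walk of length k (searched up to #|T|, which suffices since a shortest
   walk has at most #|T| - 1 edges); #|T|.+1 if v is unreachable. *)
Definition dist (S : {set T}) (u v : T) : nat :=
  find (fun k => walk S k u v) (iota 0 #|T|.+1).

Definition connected_in (S : {set T}) : Prop :=
  forall u v, u \in S -> v \in S -> exists k, walk S k u v.

Definition diam_eq2 (S : {set T}) : Prop :=
  (forall u v, u \in S -> v \in S -> dist S u v <= 2) /\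
  (exists u v, [/\ u \in S, v \in S & dist S u v = 2]).

Definition resolving (S W : {set T}) : bool :=
  (W \subset S) &&
  [forall u in S, forall v in S,
     [forall w in W, dist S u w == dist S v w] ==> (u == v)].

Definition metric_dim (S : {set T}) : nat :=
  \big[minn/#|S|]_(W : {set T} | resolving S W) #|W|.

End Graph.

(* Main.v *)
Require Import Defs.
From mathcomp Require Import all_boot.
From mathcomp Require Import zify.
Set Implicit Arguments.

Section Aux.
Variables (T : finType) (e : rel T).

Lemma walk_mono (S : {set T}) k u v : walk e S k u v -> walk e [set: T] k u v.
Proof.
elim: k u => [//|k IH] u /= /existsP [x /andP [_ /andP [Hux Hw]]].
by apply/existsP; exists x; rewrite in_setT Hux IH.
Qed.

Lemma walk1 (S : {set T}) u v : v \in S -> walk e [set: T] 1 u v -> walk e S 1 u v.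
Proof.
move=> vS /= /existsP [x]; move=> /andP [_ /andP [Hux /eqP Hx]].
by apply/existsP; exists x; subst x; rewrite vS Hux eqxx.
Qed.

Lemma dist_self (S : {set T}) u : dist e S u u = 0.
Proof. by rewrite /dist /= eqxx. Qed.

Lemma dist0 (S : {set T}) u v : dist e S u v = 0 -> u = v.
Proof.
rewrite /dist /=; case: ifP => [/eqP //|_].
by [].
Qed.

Lemma dist_eq (S : {set T}) u v : u \in S -> v \in S -> dist e S u v <= 2 ->
  dist e [set: T] u v = dist e S u v.
Proof.
move=> uS vS Hd.
set s := iota 0 #|T|.+1.
have Hsz : size s = #|T|.+1 by rewrite size_iota.
have Hnth : forall j, j < size s -> nth 0 s j = j.
  by move=> j; rewrite Hsz => Hj; rewrite nth_iota.
have Heq : forall j, j <= 1 -> walk e [set: T] j u v = walk e S j u v.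
  move=> j Hj; apply/idP/idP; last exact: walk_mono.
  by case: j Hj => [//|[|//]] _; apply: walk1.
rewrite /dist -/s.
set P := fun k => walk e S k u v.
set Q := fun k => walk e [set: T] k u v.
have HdP : find P s <= 2 by exact: Hd.
have Hlt : find P s < size s.
  rewrite ltn_neqAle find_size andbT; apply/eqP => Hf.
  have Hu : u != v.
    apply/negP => /eqP Huv.
    by move: Hf; rewrite /s /P Huv /= ?eqxx.
  have : 1 < #|T|.
    have := subset_leq_card (subsetT [set u; v]).
    by rewrite cards2 Hu cardsT.
  move: Hd; rewrite /dist -/s -/P Hf Hsz; lia.
have HP : P (find P s) by move: (nth_find 0 (etrans (has_find P s) Hlt)); rewrite Hnth.
have HQ : Q (find P s) := (@walk_mono S _ _ _ HP).
case: (ltngtP (find Q s) (find P s)) => // H.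
- have HQs : find Q s < size s by apply: ltn_trans Hlt.
  have HQq := nth_find 0 (etrans (has_find Q s) HQs).
  rewrite Hnth // in HQq.
  have Hq1 : find Q s <= 1 by move: H HdP; clear; lia.
  have HPq : P (find Q s) by rewrite /P -Heq.
  by have := before_find 0 H; rewrite Hnth // HPq.
- by have := before_find 0 H; rewrite Hnth // => HQf; rewrite /Q in HQ HQf; rewrite HQ in HQf.
Qed.

Lemma bigmin_cases (I : finType) (P : pred I) (F : I -> nat) x0 :
  let m := \big[minn/x0]_(i | P i) F i in
  m = x0 \/ exists i, P i /\ F i = m.
Proof.
apply: (big_ind (fun m => m = x0 \/ exists i, P i /\ F i = m)).
- by left.
- move=> a b Ha Hb; case: (leqP a b) => Hab /=.
  + by [].
  + by [].
- by move=> i Pi; right; exists i.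
Qed.

Lemma bigmin_le (I : finType) (P : pred I) (F : I -> nat) x0 i0 :
  P i0 -> \big[minn/x0]_(i | P i) F i <= F i0.
Proof.
move=> Pi; have : i0 \in index_enum I by rewrite mem_index_enum.
elim: (index_enum I) => [//|j r IH]; rewrite big_cons inE.
case/orP => [/eqP <-|Hr]; first by rewrite Pi geq_minl.
case: (P j); last exact: IH.
by rewrite geq_min IH // orbT.
Qed.

End Aux.

Theorem corollary2p6 (T : finType) (e : rel T)
  (e_sym : symmetric e) (e_irr : irreflexive e)
  (G_conn : connected_in e [set: T])
  (S : {set T}) (H_diam : diam_eq2 e S) (t : nat) (t_pos : 0 < t) :
  metric_dim e S + t = #|S| ->
  metric_dim e [set: T] + t <= #|T|.
Proof.
move=> Hmd.
have [Hx|[WH [HWH HWHc]]] := @bigmin_cases _ (fun W => resolving e S W) (fun W => #|W|) #|S|.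
  by rewrite /metric_dim Hx in Hmd; lia.
rewrite /metric_dim in Hmd; rewrite -HWHc in Hmd.
move: HWH => /andP [WHS /forallP Hres].
set W := WH :|: ~: S.
have HW : resolving e [set: T] W.
  apply/andP; split; first exact: subsetT.
  apply/forallP => u; apply/implyP => _; apply/forallP => v; apply/implyP => _.
  apply/implyP => /forallP Hd.
  case: (boolP (u \in S)) => uS; last first.
    have := Hd u; rewrite !inE uS orbT /= dist_self => /eqP H.
    by rewrite (@dist0 _ _ _ _ _ (esym H)).
  case: (boolP (v \in S)) => vS; last first.
    have := Hd v; rewrite !inE vS orbT /= dist_self => /eqP H.
    by rewrite (@dist0 _ _ _ _ _ H).
  have := Hres u; rewrite uS /= => /forallP /(_ v); rewrite vS /=.
  move=> /implyP; apply; apply/forallP => w; apply/implyP => wW.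
  have wS : w \in S by apply: (subsetP WHS).
  have := Hd w; rewrite inE wW /= => /eqP.
  have Hdm : forall a b, a \in S -> b \in S -> dist e S a b <= 2 by case: H_diam.
  by rewrite (@dist_eq _ _ S u w) ?Hdm // (@dist_eq _ _ S v w) ?Hdm // => ->.
have Hle : metric_dim e [set: T] <= #|W| := @bigmin_le _ (fun W => resolving e [set: T] W) (fun W => #|W|) #|[set: T]| W HW.
have HWc : #|W| <= #|WH| + #|~: S| by apply: leq_card_setU.
have Hc := cardsC S.
move: Hle HWc Hc; lia.
Qed.
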